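(* Let $d$ be an odd integer. Then $U=\{(0,0)\}\cup\{(e,f)\in\mathcal{B}\mid f=d\}$ is avoidable.
   Context: The bicyclic inverse semigroup is $\mathcal{B}=\{(a,b)\in\mathbb{Z}\times\mathbb{Z}\mid a\ge 0,\ a+b\ge 0\}$ with multiplication $(a,b)(c,d)=(\max\{c+d,a\}-d,\ b+d)$. A subset $U\subseteq\mathcal{B}$ is called avoidable if $\mathcal{B}$ can be partitioned into two subsets $A$ and $B$ such that no element of $U$ can be written as a product $xy$ of two distinct elements $x\neq y$ both in $A$, or both in $B$. *)

(* Defs.v *)
From Stdlib Require Import ZArith.
Open Scope Z_scope.

(* The bicyclic inverse semigroup B = {(a,b) in Z x Z | a >= 0, a + b >= 0}. *)
Definition inB (x : Z * Z) : Prop := 0 <= fst x /\ 0 <= fst x + snd x.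

Definition bmul (x y : Z * Z) : Z * Z :=
  (Z.max (fst y + snd y) (fst x) - snd y, snd x + snd y).

Definition avoidable (U : Z * Z -> Prop) : Prop :=
  exists A : Z * Z -> Prop,
    forall x y : Z * Z, inB x -> inB y -> x <> y ->
      U (bmul x y) ->
      ~ ((A x /\ A y) \/ (~ A x /\ ~ A y)).

(* Main.v *)
Require Import Defs.
From Stdlib Require Import ZArith Lia Bool.
Open Scope Z_scope.

Definition G (D y : Z) : bool :=
  if 1 <=? y then Z.odd (y / D) else Z.odd ((D - y) / D).

Lemma G_sym D y : 0 < D -> G D y = G D (D - y).
Proof.
  intros HD. unfold G.
  destruct (1 <=? y) eqn:E1; destruct (1 <=? D - y) eqn:E2;
    rewrite ?Z.leb_le, ?Z.leb_gt in *.
  - rewrite (Z.div_small y D) by lia. rewrite (Z.div_small (D - y) D) by lia. reflexivity.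
  - now replace (D - (D - y)) with y by lia.
  - reflexivity.
  - lia.
Qed.

Lemma G_step D a : 0 < D -> 0 < a -> G D a <> G D (a + D).
Proof.
  intros HD Ha. unfold G.
  replace (1 <=? a) with true by (symmetry; apply Z.leb_le; lia).
  replace (1 <=? a + D) with true by (symmetry; apply Z.leb_le; lia).
  replace (a + D) with (a + 1 * D) by lia.
  rewrite Z.div_add by lia. rewrite Z.odd_add. simpl.
  destruct (Z.odd (a / D)); discriminate.
Qed.

Lemma g_exists d : d <> 0 ->
  exists g : Z -> bool, (forall b, g b = g (d - b)) /\
    (forall a, 0 < a -> g a <> g (a + d)).
Proof.
  intros Hd. destruct (Z_lt_le_dec 0 d) as [Hp|Hn].
  - exists (G d). split.
    + intros b. apply G_sym; lia.
    + intros a Ha. apply G_step; lia.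
  - exists (fun y => G (- d) (- y)). split.
    + intros b. rewrite (G_sym (-d) (-b)) by lia. f_equal; lia.
    + intros a Ha.
      rewrite (G_sym (-d) (-a)) by lia.
      rewrite (G_sym (-d) (-(a+d))) by lia.
      replace (- d - - a) with (a + - d) by lia.
      replace (- d - - (a + d)) with a by lia.
      intro H. symmetry in H. revert H. apply G_step; lia.
Qed.

Theorem proposition6p2 (d : Z) (hd : Z.odd d = true) :
  avoidable (fun u => u = (0, 0) \/ (inB u /\ snd u = d)).
Proof.
  assert (Hd0 : d <> 0) by (intro; subst; discriminate).
  destruct (g_exists d Hd0) as [g [Hsym Hstep]].
  exists (fun x => Z.odd (snd x) = g (snd x)).
  intros [a b] [c e] Hx Hy Hne HU. unfold inB, bmul in *; simpl in *.
  destruct HU as [H0 | [_ Hd]].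
  - injection H0 as H1 H2.
    assert (c = 0 /\ a = - b) as [-> ->] by lia.
    assert (Hb : 0 < e) by (assert (e <> 0) by (intro; subst; apply Hne; f_equal; lia); lia).
    replace b with (- e) in * by lia.
    rewrite Z.odd_opp. rewrite (Hsym (- e)).
    replace (d - - e) with (e + d) by lia.
    specialize (Hstep e Hb).
    destruct (Z.odd e), (g e), (g (e + d)); simpl in *; intuition congruence.
  - replace e with (d - b) in * by lia.
    rewrite <- (Hsym b).
    assert (Z.odd (d - b) = negb (Z.odd b)).
    { rewrite Z.odd_sub, hd. destruct (Z.odd b); reflexivity. }
    rewrite H.
    destruct (Z.odd b), (g b); simpl; intuition congruence.
Qed.
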